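(* Let $\mathcal G$ be a convex set of functions $\mathcal X\to\mathbb R^{d_y}$ with $0\in\mathcal G$, let $\theta>8$, $r>0$, $\alpha\in[1,2]$, $C>0$, $S\ge1$. Let $\partial B(r):=\{f\in\mathcal G:\|f\|_{L^2}=r\}$ and let $\mathcal F_r\subseteq\partial B(r)$ be an $r/\sqrt\theta$-cover of $\partial B(r)$ in the norm $\|f\|_\infty=\sup_x\|f(x)\|_2$ of minimal cardinality $N_\infty(\partial B(r),r/\sqrt\theta)$. Assume every $f\in\mathcal F_r$ satisfies $S$-persistence and $(C,\alpha)$-hypercontractivity. Define the event $$\mathcal A_r:=\Big\{\exists f\in\mathcal G:\ \|f\|_{L^2}>r,\ \tfrac1T\textstyle\sum_{t=0}^{T-1}\|f(X_t)\|_2^2\le\tfrac1\theta\|f\|_{L^2}^2\Big\}.$$ Then $$\mathsf P_X(\mathcal A_r)\le N_\infty\big(\partial B(r),\tfrac{r}{\sqrt\theta}\big)\exp\Big\{-\frac{8T\,r^{4-2\alpha}}{\theta^2CS}\Big\}.$$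
   Context: $X=(X_0,\dots,X_{T-1})$ is a random trajectory in a set $\mathcal X^T$ with law $\mathsf P_X$. For $f:\mathcal X\to\mathbb R^{d_y}$, $\|f\|_{L^2}^2:=\frac1T\sum_{t}\mathbb E\|f(X_t)\|_2^2$. A function $f$ satisfies $S$-persistence if for every $\xi\ge0$, $\mathbb E\exp(-\xi\sum_t\|f(X_t)\|_2^2)\le\exp\big(-\xi\sum_t\mathbb E\|f(X_t)\|_2^2+\frac{\xi^2S}{2}\sum_t\mathbb E\|f(X_t)\|_2^4\big)$. A function $f$ is $(C,\alpha)$-hypercontractive if $\frac1T\sum_t\mathbb E\|f(X_t)\|_2^4\le C\big(\frac1T\sum_t\mathbb E\|f(X_t)\|_2^2\big)^\alpha$. (In the paper, $\mathcal G$ is the shifted effective class $\{f-f_\star: f\in\mathcal F,\ \|\mathcal D(f-f_\star)\|_{L^2}^2\le\rho\}$, which is convex and contains $0$.) *)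

(* Defs.v *)
From HB Require Import structures.
From mathcomp Require Import all_boot all_order all_algebra.
From mathcomp Require Import all_classical all_reals all_analysis.
Set Implicit Arguments. Unset Strict Implicit. Unset Printing Implicit Defensive.
Import Order.TTheory GRing.Theory Num.Theory.
Local Open Scope classical_set_scope.
Local Open Scope ring_scope.

Section Defs.
Context {R : realType} {d : measure_display} {Omega : measurableType d}
  (P : probability Omega R) {dX : measure_display} {Xs : measurableType dX}
  {T : nat} (X : 'I_T -> Omega -> Xs) {dy : nat}.

Definition sqn (v : 'rV[R]_dy) : R := \sum_(i < dy) (v ord0 i) ^+ 2.
Definition norm2 (v : 'rV[R]_dy) : R := Num.sqrt (sqn v).

(* expectation of a real random variable (real-valued; meaningful when integrable) *)
Definition Ex (h : Omega -> R) : R := fine (\int[P]_w (h w)%:E).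

Definition L2sq (f : Xs -> 'rV[R]_dy) : R :=
  (T%:R)^-1 * \sum_(t < T) Ex (fun w => sqn (f (X t w))).
Definition L2norm (f : Xs -> 'rV[R]_dy) : R := Num.sqrt (L2sq f).
Definition L4avg (f : Xs -> 'rV[R]_dy) : R :=
  (T%:R)^-1 * \sum_(t < T) Ex (fun w => sqn (f (X t w)) ^+ 2).

Definition persistent (S : R) (f : Xs -> 'rV[R]_dy) : Prop :=
  (forall t : 'I_T, P.-integrable setT (fun w => (sqn (f (X t w)) ^+ 2)%:E)) /\
  forall xi : R, 0 <= xi ->
    Ex (fun w => expR (- xi * \sum_(t < T) sqn (f (X t w))))
    <= expR (- xi * \sum_(t < T) Ex (fun w => sqn (f (X t w)))
             + xi ^+ 2 * S / 2 * \sum_(t < T) Ex (fun w => sqn (f (X t w)) ^+ 2)).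

Definition hypercontractive (C alpha : R) (f : Xs -> 'rV[R]_dy) : Prop :=
  (forall t : 'I_T, P.-integrable setT (fun w => (sqn (f (X t w)) ^+ 2)%:E)) /\
  L4avg f <= C * (L2sq f) `^ alpha.

Definition sphere (G : set (Xs -> 'rV[R]_dy)) (r : R) : set (Xs -> 'rV[R]_dy) :=
  [set f | G f /\ L2norm f = r].

Definition event_A (G : set (Xs -> 'rV[R]_dy)) (theta r : R) : set Omega :=
  [set w | exists f, G f /\ r < L2norm f /\
     (T%:R)^-1 * \sum_(t < T) sqn (f (X t w)) <= theta^-1 * L2sq f].
End Defs.

Definition convex_fset {R : realType} {A : Type} {dy : nat}
  (G : set (A -> 'rV[R]_dy)) : Prop :=
  forall f g, G f -> G g -> forall l : R, 0 <= l <= 1 ->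
    G (fun x => l *: f x + (1 - l) *: g x).

Definition sup_cover {R : realType} {A : Type} {dy : nat}
  (B : set (A -> 'rV[R]_dy)) (eps : R) (N : nat) (F : 'I_N -> A -> 'rV[R]_dy) : Prop :=
  (forall i, B (F i)) /\
  forall g, B g -> exists i, forall x, norm2 (F i x - g x) <= eps.

(* Main.v *)
Require Import Defs.
From HB Require Import structures.
From mathcomp Require Import all_boot all_order all_algebra.
From mathcomp Require Import all_classical all_reals all_analysis.
From mathcomp Require Import ring lra measurable_realfun.
Import Order.TTheory GRing.Theory Num.Theory.
Local Open Scope classical_set_scope.
Local Open Scope ring_scope.

Section H.
Variables (R : realType) (dy : nat).

Lemma sqn_ge0 (v : 'rV[R]_dy) : 0 <= sqn v.
Proof. by rewrite /sqn; apply: sumr_ge0 => i _; apply: sqr_ge0. Qed.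

Lemma sqnZ (l : R) (v : 'rV[R]_dy) : sqn (l *: v) = l ^+ 2 * sqn v.
Proof. rewrite /sqn mulr_sumr; apply: eq_bigr => i _; rewrite mxE; lra. Qed.

Lemma sqnD2 (a b : 'rV[R]_dy) : sqn (a + b) <= 2 * sqn a + 2 * sqn b.
Proof.
rewrite /sqn !mulr_sumr -big_split /=; apply: ler_sum => i _; rewrite mxE.
have := sqr_ge0 (a ord0 i - b ord0 i); nra.
Qed.

Lemma sqn_norm2 (v : 'rV[R]_dy) e : norm2 v <= e -> sqn v <= e ^+ 2.
Proof.
rewrite /norm2 => h.
have h0 := sqn_ge0 v.
have s0 : 0 <= Num.sqrt (sqn v) := sqrtr_ge0 _.
have := sqr_sqrtr h0. nra.
Qed.
End H.
Section H2.
Variables (R : realType) (d : measure_display) (Omega : measurableType d)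
  (P : probability Omega R).

Lemma ExZ (h : Omega -> R) (k : R) : P.-integrable setT (fun w => (h w)%:E) ->
  Ex P (fun w => k * h w) = k * Ex P h.
Proof.
move=> ih; rewrite /Ex.
under eq_integral => w _ do rewrite EFinM.
rewrite integralZl // fineM //; exact: integrable_fin_num.
Qed.

Lemma mle (Y : Omega -> R) (c : R) : measurable_fun setT Y ->
  measurable [set w | Y w <= c].
Proof.
move=> mY.
have -> : [set w | Y w <= c] = setT `&` Y @^-1` (`]-oo, c]%classic : set R).
  by apply/seteqP; split => w /=; rewrite in_itv /=; [move=> h; split|case].
exact: mY.
Qed.

Lemma chern (Y : Omega -> R) (c xi : R) : measurable_fun setT Y ->
  (forall w, 0 <= Y w) -> 0 <= xi ->
  (P [set w | (Y w <= c)%R] <= (expR (xi * c) * Ex P (fun w => expR (- xi * Y w)))%:E)%E.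
Proof.
move=> mY Y0 xi0.
have mZ : measurable_fun setT (fun w => expR (- xi * Y w)).
  apply: measurableT_comp; first exact: measurable_realfun.measurable_expR.
  exact: measurable_realfun.measurable_funM.
have iZ : P.-integrable setT (fun w => (expR (- xi * Y w))%:E).
  apply: measurable_bounded_integrable => //.
    by apply: (le_lt_trans (probability_le1 P measurableT)); rewrite ltry.
  exists 1; split => // x x1 w _ /=.
  rewrite ger0_norm ?expR_ge0 //; apply: le_trans (ltW x1).
  rewrite -expR0 ler_expR; have := Y0 w; nra.
rewrite -(setIT [set w | (Y w <= c)%R]) -integral_indic //; last exact: mle.
apply: (@le_trans _ _ (\int[P]_w ((expR (xi * c))%:E * (expR (- xi * Y w))%:E))%E).
  apply: ge0_le_integral => //.
  - apply/measurable_EFinP; apply: measurable_indic; exact: mle.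
  - under eq_fun do rewrite -EFinM.
    apply/measurable_EFinP; apply: measurable_realfun.measurable_funM => //.
  - move=> w _; rewrite -EFinM lee_fin -expRD indicE.
    case: (boolP (w \in _)) => hw /=; last exact: expR_ge0.
    move: hw; rewrite inE /= => hw; rewrite -expR0 ler_expR; nra.
rewrite ge0_integralZl_EFin //; last first.
- by apply/measurable_EFinP.
rewrite /Ex EFinM fineK //; exact: integrable_fin_num.
Qed.
End H2.
Lemma arith (R : realType) (t u S C q th xi : R) : 0 < t -> 0 < u -> 1 <= S -> 0 < C -> 0 < q ->
  8 < th ->
  xi = u / (2 * S * C * q) ->
  xi * (4 * t * u / th) + (- xi * (t * u) + xi ^+ 2 * S / 2 * (t * C * q))
  <= - (8 * t * (u ^+ 2 / q)) / (th ^+ 2 * C * S).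
Proof.
move=> t0 u0 S1 C0 q0 th8 hxi.
have S0 : 0 < S by lra.
have th0 : 0 < th by lra.
set W := t * u ^+ 2 / (S * C * q).
have W0 : 0 < W by rewrite /W; apply: divr_gt0; [apply: mulr_gt0 => //; exact: exprn_gt0| apply: mulr_gt0 => //; exact: mulr_gt0].
have -> : xi * (4 * t * u / th) + (- xi * (t * u) + xi ^+ 2 * S / 2 * (t * C * q))
   = W * (2 / th - 3 / 8).
  rewrite /W hxi; field; do ?[apply/andP; split]; rewrite ?gt_eqF //; lra.
have -> : - (8 * t * (u ^+ 2 / q)) / (th ^+ 2 * C * S) = - W * (8 / th ^+ 2).
  rewrite /W; field; do ?[apply/andP; split]; rewrite ?gt_eqF //; lra.
set v := th^-1.
have v0 : 0 < v by rewrite /v invr_gt0.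
have v8 : v < 8^-1 by rewrite /v ltf_pV2 ?posrE //; lra.
have -> : 8 / th ^+ 2 = 8 * v ^+ 2 by rewrite /v exprVn.
have : (v - 8^-1) * (8 * v + 3) <= 0.
  by apply: mulr_le0_ge0; lra.
nra.
Qed.
Lemma pw (R : realType) (r a : R) : 0 < r ->
  r `^ (4 - 2 * a) = (r ^+ 2) ^+ 2 / (r ^+ 2) `^ a.
Proof.
move=> r0.
have e2 : (r ^+ 2) `^ a = r `^ (2 * a) by rewrite powRrM -[in LHS](powR_mulrn 2) // ltW.
have q0 : 0 < (r ^+ 2) `^ a by rewrite powR_gt0 // exprn_gt0.
rewrite e2 in q0 *.
apply: (mulIf (lt0r_neq0 q0)); rewrite divfK ?lt0r_neq0 //.
rewrite -powRD; last by apply/implyP => _; rewrite lt0r_neq0.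
rewrite subrK -exprM -(powR_mulrn 4) ?ltW //.
Qed.

Theorem mainTheorem7 (R : realType) (d : measure_display) (Omega : measurableType d)
  (P : probability Omega R) (dX : measure_display) (Xs : measurableType dX)
  (T : nat) (X : 'I_T -> Omega -> Xs) (dy : nat)
  (G : set (Xs -> 'rV[R]_dy)) (theta r alpha C S : R)
  (N : nat) (Fr : 'I_N -> Xs -> 'rV[R]_dy) :
  (0 < T)%N ->
  (forall t, measurable_fun setT (X t)) ->
  (forall f, G f -> forall i : 'I_dy, measurable_fun setT (fun x => f x ord0 i)) ->
  (forall f, G f -> forall t, P.-integrable setT (fun w => (sqn (f (X t w)))%:E)) ->
  convex_fset G -> G (fun _ => 0) ->
  8 < theta -> 0 < r -> 1 <= alpha <= 2 -> 0 < C -> 1 <= S ->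
  sup_cover (sphere P X G r) (r / Num.sqrt theta) Fr ->
  (forall M (F' : 'I_M -> Xs -> 'rV[R]_dy),
     sup_cover (sphere P X G r) (r / Num.sqrt theta) F' -> (N <= M)%N) ->
  (forall i, persistent P X S (Fr i)) ->
  (forall i, hypercontractive P X C alpha (Fr i)) ->
  exists B : set Omega, measurable B /\ event_A P X G theta r `<=` B /\
    (P B <= (N%:R * expR (- (8 * T%:R * r `^ (4 - 2 * alpha))
                            / (theta ^+ 2 * C * S)))%:E)%E.
Proof.
move=> T0 mX mG iG cG G0 th8 r0 /andP[a1 a2] C0 S1 [covIn cov] _ pers hyp.
have th0 : 0 < theta by lra.
have Tp : 0 < T%:R :> R by rewrite ltr0n.
set c := 4 * T%:R * r ^+ 2 / theta.
pose Y (i : 'I_N) w := \sum_(t < T) sqn (Fr i (X t w)).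
pose A (k : nat) := if insub k is Some i then [set w | (Y i w <= c)%R] else set0.
have AE (i : 'I_N) : A i = [set w | (Y i w <= c)%R] by rewrite /A valK.
have mY i : measurable_fun setT (Y i).
  have [Gi _] := covIn i.
  apply: measurable_sum => t; apply: measurable_sum => j.
  apply: measurable_funX; exact: (measurableT_comp (mG _ Gi j) (mX t)).
have mA k : measurable (A k).
  rewrite /A; case: insub => [i|] //; exact: mle.
exists (\big[setU/set0]_(k < N) A k).
split; first by apply: bigsetU_measurable.
split.
  move=> w [f [Gf [rf hf]]].
  set L := L2sq P X f.
  have sL0 : 0 < Num.sqrt L by apply: lt_trans rf.
  have L0 : 0 < L by rewrite -sqrtr_gt0.
  have eL : Num.sqrt L ^+ 2 = L by rewrite sqr_sqrtr // ltW.
  set l := r / Num.sqrt L.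
  have l0 : 0 <= l by rewrite /l divr_ge0 // ltW.
  have l1 : l <= 1 by rewrite /l ler_pdivrMr // mul1r ltW.
  have hl : l ^+ 2 * L = r ^+ 2.
    by rewrite /l expr_div_n eL divfK // gt_eqF.
  pose g := fun x => l *: f x.
  have Gg : G g.
    have := cG f (fun _ => 0) Gf G0 l; rewrite l0 l1 => /(_ erefl).
    by have -> : (fun x => l *: f x + (1 - l) *: (fun=> 0 : 'rV[R]_dy) x) = g
      by apply: funext => x; rewrite scaler0 addr0.
  have Lg : L2sq P X g = r ^+ 2.
    rewrite -hl /L /L2sq mulrCA; congr (_ * _); rewrite mulr_sumr.
    apply: eq_bigr => t _.
    rewrite -ExZ; last exact: iG.
    by apply: congr1; apply: funext => w'; rewrite /g sqnZ.
  have Sg : sphere P X G r g.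
    by split => //; rewrite /L2norm Lg sqrtr_sqr ger0_norm // ltW.
  have [i hi] := cov g Sg.
  rewrite -bigcup_mkord; exists (val i) => //=; rewrite AE /=.
  have hsum : \sum_(t < T) sqn (f (X t w)) <= T%:R * (L / theta).
    move: hf; rewrite -/L => hf.
    have := ler_wpM2l (ltW Tp) hf; rewrite mulVKf ?gt_eqF // => h.
    by apply: le_trans h _; rewrite [theta^-1 * L]mulrC.
  have he : (r / Num.sqrt theta) ^+ 2 = r ^+ 2 / theta.
    by rewrite expr_div_n sqr_sqrtr // ltW.
  apply: (@le_trans _ _ (\sum_(t < T) (2 * (r ^+ 2 / theta) + 2 * (l ^+ 2 * sqn (f (X t w)))))).
    apply: ler_sum => t _.
    rewrite -{1}(subrK (g (X t w)) (Fr i (X t w))).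
    apply: le_trans (sqnD2 _ _ _ _) _.
    rewrite -sqnZ -he.
    have := @sqn_norm2 _ _ _ _ (hi (X t w)); lra.
  rewrite big_split /= sumr_const card_ord -!mulr_sumr -[_ *+ T]mulr_natl.
  have : l ^+ 2 * \sum_(t < T) sqn (f (X t w)) <= l ^+ 2 * (T%:R * (L / theta)).
    by apply: ler_wpM2l => //; exact: sqr_ge0.
  have -> : l ^+ 2 * (T%:R * (L / theta)) = T%:R * (r ^+ 2 / theta).
    by rewrite -hl; field; rewrite gt_eqF.
  rewrite /c; lra.
set e := expR _.
apply: le_trans (Boole_inequality P (A:=A) (n:=N) (fun k _ => mA k)) _.
apply: (@le_trans _ _ (\sum_(k < N) (e%:E))%E).
  apply: lee_sum => i _; rewrite AE.
  have [Gi Li] := covIn i.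
  move: Li; rewrite /L2norm => Li.
  have Lp : 0 < L2sq P X (Fr i) by rewrite -sqrtr_gt0 Li.
  have L2i : L2sq P X (Fr i) = r ^+ 2 by rewrite -Li sqr_sqrtr // ltW.
  set q := (r ^+ 2) `^ alpha.
  have q0 : 0 < q by rewrite /q powR_gt0 // exprn_gt0.
  set xi := r ^+ 2 / (2 * S * C * q).
  have xi0 : 0 <= xi.
    by rewrite /xi divr_ge0 ?sqr_ge0 // ltW // !mulr_gt0 //; lra.
  have Y0 w : 0 <= Y i w by apply: sumr_ge0 => t _; exact: sqn_ge0.
  apply: le_trans (@chern _ _ _ P (Y i) c xi (mY i) Y0 xi0) _.
  rewrite lee_fin.
  have [_ hp] := pers i.
  have hpx := hp xi xi0.
  have [_ hh] := hyp i.
  move: hh; rewrite L2i -/q /L4avg => hh.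
  move: L2i; rewrite /L2sq => L2i.
  set s1 := \sum_(t < T) _ in L2i.
  set s2 := \sum_(t < T) _ in hh.
  have s1E : s1 = T%:R * r ^+ 2.
    by rewrite -L2i mulVKf // gt_eqF.
  have s2E : s2 <= T%:R * C * q.
    have := ler_wpM2l (ltW Tp) hh; rewrite mulVKf ?gt_eqF // => h.
    by apply: le_trans h _; rewrite mulrA.
  apply: le_trans (ler_wpM2l (expR_ge0 _) hpx) _.
  rewrite -expRD ler_expR -/s1 -/s2 s1E /e pw //.
  apply: le_trans (@arith R T%:R (r ^+ 2) S C q theta xi Tp _ S1 C0 q0 th8 erefl).
    rewrite lerD2l lerD2l; apply: ler_wpM2l => //.
    apply: mulr_ge0; last lra.
    by apply: mulr_ge0 => //; [exact: sqr_ge0| lra].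
  exact: exprn_gt0.
by rewrite sumEFin sumr_const card_ord mulr_natl.
Qed.
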